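(* Let $\ell\in\mathbb R^r$ be a generic length vector with positive, weakly increasing coordinates. If there is an $\ell$-long subset $J\subset[r]$ with $\#J=\mu(\ell)$, then $\ell$ is equivalent to the length vector $(0,\dots,0,1,\dots,1)$ whose last $2\mu(\ell)-1$ coordinates equal $1$ and whose first $r-2\mu(\ell)+1$ coordinates equal $0$.
   Context: $[r]=\{1,\dots,r\}$. A length vector $\ell\in\mathbb R^r$ is generic if $\sum_{j\in J}\ell_j\ne\sum_{j\notin J}\ell_j$ for every $J\subset[r]$; $J$ is $\ell$-long if $\sum_{j\in J}\ell_j>\sum_{j\notin J}\ell_j$ and $\ell$-short otherwise. Two generic length vectors are equivalent ($\sim$) if they have the same long (equivalently, short) subsets. $\sigma_\ell(J)=\#\{j\in J: J\setminus\{j\}\text{ is }\ell\text{-short}\}$ and $\mu(\ell)=\min\{\sigma_\ell(J): J\text{ }\ell\text{-long},\ \sigma_\ell(J)>0\}$. *)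

(* Defs.v *)
From HB Require Import structures.
From mathcomp Require Import all_boot all_order all_algebra.
Set Implicit Arguments. Unset Strict Implicit. Unset Printing Implicit Defensive.
Import Order.TTheory GRing.Theory Num.Theory.
Local Open Scope ring_scope.

Section LengthVectors.
Variables (R : realFieldType) (r : nat).

Definition lsum (l : 'I_r -> R) (J : {set 'I_r}) : R := \sum_(j in J) l j.

Definition generic (l : 'I_r -> R) : bool :=
  [forall J : {set 'I_r}, lsum l J != lsum l (~: J)].

Definition long (l : 'I_r -> R) (J : {set 'I_r}) : bool :=
  lsum l (~: J) < lsum l J.

Definition short (l : 'I_r -> R) (J : {set 'I_r}) : bool := ~~ long l J.

Definition lequiv (l l' : 'I_r -> R) : bool :=
  [&& generic l, generic l' & [forall J : {set 'I_r}, long l J == long l' J]].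

Definition sigma (l : 'I_r -> R) (J : {set 'I_r}) : nat :=
  #|[set j in J | short l (J :\ j)]|.

(* mu(l) = min { sigma_l(J) : J l-long, sigma_l(J) > 0 };
   the default value r (an upper bound for sigma) is only used if the
   index set is empty, which cannot happen for positive generic l. *)
Definition mu (l : 'I_r -> R) : nat :=
  \big[minn/r]_(J : {set 'I_r} | long l J && (0 < sigma l J)%N) sigma l J.

Definition lastones (k : nat) : 'I_r -> R :=
  fun i => if (r - k <= val i)%N then 1 else 0.

End LengthVectors.

(* Main.v *)
Require Import Defs.
From HB Require Import structures.
From mathcomp Require Import all_boot all_order all_algebra.
From mathcomp Require Import zify ring lra.
Import Order.TTheory GRing.Theory Num.Theory.
Local Open Scope ring_scope.

Lemma card_ge (r a : nat) : #|[set i : 'I_r | (a <= i)%N]| = (r - a)%N.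
Proof.
rewrite -sum1_card.
transitivity (\sum_(a <= i < r) 1)%N; last by rewrite sum_nat_const_nat muln1.
by rewrite big_geq_mkord; apply: eq_bigl => i; rewrite inE.
Qed.

Lemma lsumC (R : realFieldType) r (l : 'I_r -> R) (A : {set 'I_r}) :
  lsum l (~: A) = \sum_i l i - lsum l A.
Proof.
rewrite /lsum (bigID (mem A) predT) /= addrC addrK.
by apply: eq_bigl => i; rewrite inE.
Qed.

Lemma longE (R : realFieldType) r (l : 'I_r -> R) (A : {set 'I_r}) :
  long l A = (\sum_i l i < lsum l A *+ 2).
Proof.
rewrite /long lsumC ltrBlDr -mulr2n //.
Qed.

Lemma lsum_sub {R : realFieldType} {r} {l : 'I_r -> R} {A B : {set 'I_r}} :
  (forall i, 0 <= l i) -> A \subset B -> lsum l A <= lsum l B.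
Proof.
move=> h sAB; rewrite /lsum [X in _ <= X](big_setID A) /=.
rewrite (setIidPr sAB) lerDl; apply: sumr_ge0 => i _; exact: h.
Qed.
Theorem lemma4p1 (R : realFieldType) (r : nat) (l : 'I_r -> R)
  (hgen : generic l)
  (hpos : forall i : 'I_r, 0 < l i)
  (hmono : forall i j : 'I_r, (i <= j)%N -> l i <= l j)
  (hJ : exists J : {set 'I_r}, long l J && (#|J| == mu l)) :
  lequiv l (@lastones R r (2 * mu l - 1)%N).
Proof.
have [J /andP[hJl /eqP hJc]] := hJ.
set m := mu l in hJc *.
have mu_le : forall A : {set 'I_r}, long l A -> (0 < sigma l A)%N -> (m <= sigma l A)%N.
  move=> A hA hs; rewrite /m /mu.
  have := @bigmin_le_cond _ nat _ r A (fun J => long l J && (0 < sigma l J)%N) (sigma l).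
  by rewrite hA hs => /(_ isT).
clearbody m.
have [k hk] : exists k, k = (2 * m - 1)%N by exists (2 * m - 1)%N.
rewrite -hk.
have l0 : forall i, 0 <= l i by move=> i; exact: ltW.
have tot0 : 0 <= \sum_i l i by apply: sumr_ge0 => i _.
have long_n0 : forall A : {set 'I_r}, long l A -> (0 < #|A|)%N.
  move=> A; rewrite card_gt0; apply: contraTneq => ->.
  by rewrite longE /lsum big_set0 mul0rn -leNgt.
have longU : forall A B : {set 'I_r}, A \subset B -> long l A -> long l B.
  move=> A B sAB; rewrite !longE => h; apply: (lt_le_trans h).
  by rewrite lerMn2r /=; apply: lsum_sub.
have short_compl : forall A : {set 'I_r}, ~~ long l A -> long l (~: A).
  move=> A; move/forallP: hgen => /(_ A) hA.
  rewrite /long setCK -leNgt le_eqVlt => /orP[/eqP e|//].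
  by rewrite e eqxx in hA.
have long_compl : forall A : {set 'I_r}, long l A -> ~~ long l (~: A).
  by move=> A; rewrite /long setCK => h; rewrite -leNgt ltW.
have size_ge : forall A : {set 'I_r}, long l A -> (m <= #|A|)%N.
  suff: forall n (A : {set 'I_r}), (#|A| < n)%N -> long l A -> (m <= #|A|)%N.
    by move=> H A; apply: H (ltnSn _).
  elim=> // n IH A hA hl.
  case: (boolP [exists x in A, long l (A :\ x)]).
    move/existsP=> [x /andP[xA hx]].
    have e := cardsD1 x A; rewrite xA in e.
    have := IH (A :\ x) _ hx; rewrite e in hA; lia.
  move/exists_inPn=> h.
  have E : [set j in A | short l (A :\ j)] = A.
    by apply/setP => j; rewrite !inE; case jA: (j \in A) => //=; have := h j jA.
  have -> : #|A| = sigma l A by rewrite /sigma E.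
  by apply: mu_le => //; rewrite /sigma E; exact: long_n0.
have m1 : (0 < m)%N by rewrite -hJc; exact: long_n0.
have mr : (m <= r)%N by rewrite -hJc; have := max_card (mem J); rewrite card_ord.
set S := [set i : 'I_r | (r - k <= i)%N].
set T := [set i : 'I_r | (r - m <= i)%N].
have rk : (k <= r)%N.
  set Z := [set i : 'I_r | (r - (m - 1) <= i)%N].
  have cZ : #|Z| = (m - 1)%N by rewrite /Z card_ge; lia.
  have hZ : ~~ long l Z by apply/negP => /size_ge; rewrite cZ; lia.
  have h2 : (m <= #|~: Z|)%N := size_ge _ (short_compl _ hZ).
  have h1 : (#|Z| + #|~: Z| = r)%N by rewrite cardsC card_ord.
  rewrite cZ in h1; lia.
have cardS : #|S| = k by rewrite /S card_ge; lia.
have cardT : #|T| = m by rewrite /T card_ge; lia.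
have longT : long l T.
  have cr : (r - m < r)%N by lia.
  set c := Ordinal cr.
  have le1 : lsum l (J :\: T) <= l c *+ #|J :\: T|.
    rewrite -sumr_const /lsum; apply: ler_sum => i; rewrite !inE => /andP[iT _].
    apply: hmono; rewrite /= ; lia.
  have le2 : l c *+ #|T :\: J| <= lsum l (T :\: J).
    rewrite -sumr_const /lsum; apply: ler_sum => i; rewrite !inE => /andP[_ iT].
    by apply: hmono.
  have ec : #|J :\: T| = #|T :\: J|.
    have e1 : (#|J :&: T| + #|J :\: T| = #|J|)%N := cardsID T J.
    have e2 : (#|J :&: T| + #|T :\: J| = #|T|)%N by rewrite setIC cardsID.
    rewrite hJc in e1; rewrite cardT in e2; lia.
  have : lsum l J <= lsum l T.
    rewrite /lsum (big_setID T) [X in _ <= X](big_setID J) /= setIC.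
    rewrite lerD2l; apply: (le_trans le1); rewrite ec; exact: le2.
  move: hJl; rewrite !longE => h1 h2; apply: (lt_le_trans h1).
  by rewrite lerMn2r.
have TS : T \subset S.
  by apply/subsetP => i; rewrite !inE; lia.
have key : forall n (X : {set 'I_r}), (\sum_(i in X) i.+1 < n)%N -> long l X ->
    (#|X :&: S| < m)%N -> False.
  elim=> // n IH X hw hX hS.
  have [s sX sT] : exists2 s, s \in X & s \in T.
    case: (boolP [exists s, (s \in X) && (s \in T)]).
      by move/existsP=> [s /andP[]]; exists s.
    move/existsPn=> h.
    have s1 : X \subset ~: T.
      by apply/subsetP => i iX; rewrite inE; have := h i; rewrite iX.
    have s2 : T \subset ~: X by rewrite subsetC.
    have := lsum_sub l0 s1; have := lsum_sub l0 s2.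
    move: hX longT; rewrite /long => a b c d.
    have := lt_le_trans a d; have := lt_le_trans b c.
    move=> x y; have := lt_trans x y; by rewrite ltxx.
  have sS : s \in S by apply: (subsetP TS).
  have [y [yS yX ys]] : exists y, [/\ y \in S, y \notin X & (y < s)%N].
    case: (boolP [exists y, [&& y \in S, y \notin X & (y < s)%N]]).
      by move/existsP=> [y /and3P[a b c]]; exists y; split.
    move/existsPn=> h.
    have sub : S :\: X \subset [set i : 'I_r | (s.+1 <= i)%N].
      apply/subsetP => i; rewrite !inE => /andP[iX iS].
      have := h i; rewrite inE iS iX /=; rewrite -leqNgt leq_eqVlt.
      case/orP=> // /eqP/ord_inj e; by move: iX; rewrite -e sX.
    have c1 := subset_leq_card sub; rewrite card_ge in c1.
    have c2 : (#|S :&: X| + #|S :\: X| = #|S|)%N := cardsID X S.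
    have c3 : #|S :&: X| = #|X :&: S| by rewrite setIC.
    rewrite cardS c3 in c2.
    have sl : (s < r)%N := ltn_ord s.
    move: sT; rewrite inE => sT; clear - c1 c2 hS sl sT hk rk; lia.
  set Y := y |: X.
  have YX : X \subset Y by apply/subsetP => i iX; rewrite !inE iX orbT.
  have hY := longU _ _ YX hX.
  have sY : s \in Y by rewrite !inE sX orbT.
  have sig0 : sigma l Y = 0%N.
    apply/eqP; rewrite -leqn0 leqNgt; apply/negP => hs.
    have := mu_le _ hY hs.
    have : (sigma l Y <= #|X :&: S|)%N.
      apply: subset_leq_card; apply/subsetP => j; rewrite !inE => /andP[jY hj].
      have jy : j != y.
        by apply/negP => /eqP e; move: hj; rewrite e /short /Y setU1K // hX.
      move: jY; rewrite (negbTE jy) /= => jX; rewrite jX /=.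
      rewrite leqNgt; apply/negP => jS.
      move: hj; rewrite /short; apply/negP/negPn.
      have ly : l j <= l y.
        apply: hmono; move: yS; rewrite inE => yS; exact: ltnW (leq_trans jS yS).
      have e1 : lsum l Y = l y + lsum l X by rewrite /lsum /Y big_setU1.
      have jY' : j \in Y by rewrite !inE jX orbT.
      have e2 : lsum l Y = l j + lsum l (Y :\ j) by rewrite /lsum (big_setD1 j).
      move: hX; rewrite !longE => hX; apply: (lt_le_trans hX).
      rewrite lerMn2r /=.
      have -> : lsum l (Y :\ j) = l y + lsum l X - l j by rewrite -e1 e2 [l j + _]addrC addrK.
      have -> : l y + lsum l X - l j = lsum l X + (l y - l j) by ring.
      by rewrite lerDl subr_ge0.
    move=> a b; clear - a b hS; lia.
  have hZ : long l (Y :\ s).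
    have : s \notin [set j in Y | short l (Y :\ j)].
      apply/negP => hin; have : (0 < sigma l Y)%N.
        by rewrite /sigma card_gt0; apply/set0Pn; exists s.
      by rewrite sig0.
    by rewrite inE sY /= /short negbK.
  apply: (IH (Y :\ s)) hZ _.
    have e1 : (\sum_(i in Y) i.+1 = y.+1 + \sum_(i in X) i.+1)%N by rewrite /Y big_setU1.
    have e2 : (\sum_(i in Y) i.+1 = s.+1 + \sum_(i in Y :\ s) i.+1)%N by rewrite (big_setD1 s).
    rewrite e1 in e2; rewrite -(ltn_add2l s.+1) -e2.
    by rewrite -addnS [(s.+1 + n)%N]addSnnS; exact: leq_add ys hw.
  have sub : (Y :\ s) :&: S \subset y |: ((X :&: S) :\ s).
    apply/subsetP => i; rewrite !inE.
    case/andP=> /andP[isn /orP[->//|iX]] iS; by rewrite isn iX iS orbT.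
  have c1 := subset_leq_card sub.
  have c2 := cardsU1 y ((X :&: S) :\ s).
  have c3 := cardsD1 s (X :&: S).
  have sXS : s \in X :&: S by rewrite inE sX sS.
  rewrite sXS in c3.
  rewrite c2 in c1; apply: (leq_ltn_trans c1); rewrite c3 in hS.
  apply: leq_ltn_trans _ hS; rewrite leq_add2r; by case: (_ \notin _).
have key' : forall X : {set 'I_r}, long l X -> (#|X :&: S| < m)%N -> False.
  by move=> X; apply: key (ltnSn _).
have cardSX : forall X : {set 'I_r}, (#|X :&: S| + #|~: X :&: S| = k)%N.
  by move=> X; rewrite -cardS -(cardsID X S) setDE [S :&: X]setIC [S :&: ~: X]setIC.
have longS : forall X : {set 'I_r}, long l X = (m <= #|X :&: S|)%N.
  move=> X; apply/idP/idP.
    by move=> hX; rewrite leqNgt; apply/negP; exact: key' hX.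
  move=> h; apply/negPn/negP => hn; apply: (key' _ (short_compl _ hn)).
  have := cardSX X; clear - h hk m1; lia.
have lastsum : forall X : {set 'I_r}, lsum (@lastones R r k) X = (#|X :&: S|)%:R.
  move=> X; rewrite /lsum /lastones -big_mkcondr /=.
  rewrite (eq_bigl (mem (X :&: S))); last by move=> i; rewrite !inE.
  by rewrite sumr_const.
have longL : forall X : {set 'I_r}, long (@lastones R r k) X = (m <= #|X :&: S|)%N.
  move=> X; rewrite /long !lastsum ltr_nat.
  have := cardSX X; clear - hk m1; lia.
have genL : generic (@lastones R r k).
  apply/forallP => X; rewrite !lastsum eqr_nat; apply/eqP => e.
  have := cardSX X; rewrite e; clear - hk m1; lia.
rewrite /lequiv hgen genL /=; apply/forallP => X; by rewrite longS longL.
Qed.
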